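(* (a) A sphere with $6$ punctures has an ideal triangulation satisfying (T4). (b) A sphere with $5$ punctures has an ideal triangulation satisfying (T3$\tfrac12$), but no ideal triangulation satisfying (T4). (c) A sphere with $4$ punctures has an ideal triangulation satisfying (T3), but no ideal triangulation satisfying (T3$\tfrac12$).
   Context: Arcs incident to a puncture are counted with multiplicity (an arc with both endpoints at the puncture counts twice). (T3): at each puncture at least three arcs of $T$ are incident. (T3$\tfrac12$): $T$ has (T3) and every arc of $T$ has an endpoint with at least four incident arcs. (T4): at each puncture at least four arcs of $T$ are incident. *)

(* Defs.v *)
From mathcomp Require Import all_boot all_order all_fingroup.
Set Implicit Arguments. Unset Strict Implicit. Unset Printing Implicit Defensive.
Import GroupScope.

(* Combinatorial model of an (ideal) triangulation of an oriented closed
   surface: a combinatorial map on a finite set of darts (half-arcs) D.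
   - [a] is the fixed-point-free involution pairing the two darts of an arc;
   - [s] is the rotation around punctures (vertices): its cycles are the
     punctures, and the cycle of a dart is the cyclically ordered list of arc
     ends at that puncture (so a loop arc contributes twice);
   - the faces are the cycles of [a * s] (x |-> s (a x)), all of length 3.
   Connectedness + Euler characteristic 2 make the surface a sphere, and the
   number of s-cycles is the number of punctures. Self-folded triangles are
   allowed (as in Fomin-Shapiro-Thurston). *)

Definition map_rel (D : finType) (s a : {perm D}) : rel D :=
  fun u v => (v == s u) || (v == a u).

Definition ideal_triang_sphere (n : nat) (D : finType) (s a : {perm D}) : Prop :=
  [/\ (forall x, a x != x /\ a (a x) = x),
      (forall x, #|porbit (a * s) x| = 3),
      (forall x y, connect (map_rel s a) x y),
      #|porbits s| + #|porbits (a * s)| = #|porbits a| + 2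
    & #|porbits s| = n].

Definition puncture_degree (D : finType) (s : {perm D}) (x : D) : nat :=
  #|porbit s x|.

Definition T3 (D : finType) (s a : {perm D}) : Prop :=
  forall x, 3 <= puncture_degree s x.

Definition T3half (D : finType) (s a : {perm D}) : Prop :=
  T3 s a /\
  forall x, 4 <= puncture_degree s x \/ 4 <= puncture_degree s (a x).

Definition T4 (D : finType) (s a : {perm D}) : Prop :=
  forall x, 4 <= puncture_degree s x.

(* Main.v *)
Require Import Defs.
From mathcomp Require Import all_boot all_order all_fingroup.
From mathcomp Require Import zify.
Set Implicit Arguments. Unset Strict Implicit. Unset Printing Implicit Defensive.

Section Gen.
Variable T : finType.
Implicit Types s : {perm T}.

Lemma sum_porbits s (F : nat -> nat) :
  \sum_(x : T) F #|porbit s x| = \sum_(A in porbits s) #|A| * F #|A|.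
Proof.
rewrite (partition_big_imset (porbit s)) /=.
apply: eq_bigr => A /imsetP[y _ ->].
rewrite (eq_bigr (fun _ => F #|porbit s y|)); last by move=> i /eqP ->.
rewrite sum_nat_const; congr (_ * _); apply: eq_card => i.
by rewrite -eq_porbit_mem.
Qed.

Lemma iter_mulk s x k q : iter k s x = x -> iter (q * k) s x = x.
Proof. by move=> H; elim: q => [|q IH] //; rewrite mulSn iterD IH. Qed.

Lemma card_porbit_k s x k : 0 < k -> iter k s x = x -> uniq (traject s x k) ->
  #|porbit s x| = k.
Proof.
move=> k0 Hk U.
have E : porbit s x =i traject s x k.
  move=> y; apply/idP/idP => [/porbitP[i ->]|/trajectP[i _ ->]]; last by rewrite -permX mem_porbit.
  apply/trajectP; exists (i %% k); first by rewrite ltn_mod.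
  by rewrite permX {1}(divn_eq i k) addnC iterD iter_mulk.
by rewrite (eq_card E) (card_uniqP U) size_traject.
Qed.

Lemma deg_sum s : #|T| = \sum_(A in porbits s) #|A|.
Proof.
rewrite -sum1_card (sum_porbits s (fun _ => 1)).
by apply: eq_bigr => A _; rewrite muln1.
Qed.

Lemma unif_count s k : (forall x, #|porbit s x| = k) -> #|porbits s| * k = #|T|.
Proof.
move=> H; rewrite (deg_sum s) -sum_nat_const; apply: eq_bigr => A /imsetP[y _ ->].
by rewrite H.
Qed.

Lemma div_count s L : 0 < L -> (forall x, #|porbit s x| %| L) ->
  #|porbits s| * L = \sum_(x : T) (L %/ #|porbit s x|).
Proof.
move=> L0 H; rewrite (sum_porbits s (fun k => L %/ k)) -sum_nat_const.
apply: eq_bigr => A /imsetP[y _ ->].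
by rewrite mulnC divnK.
Qed.

Lemma card_inv s x : s x != x -> s (s x) = x -> #|porbit s x| = 2.
Proof.
move=> H1 H2; apply: card_porbit_k => //=.
by rewrite inE eq_sym H1.
Qed.

Lemma my_connect_rev (e : rel T) : (forall x y, e x y -> connect e y x) ->
  forall x y, connect e x y -> connect e y x.
Proof.
move=> He x y /connectP[p]; elim: p x => [|z p IH] x /=; first by move=> _ ->.
case/andP=> exz pz Ey; apply: connect_trans (He _ _ exz); exact: IH.
Qed.

Lemma map_rel_rev (s a : {perm T}) : (forall x, a (a x) = x) ->
  forall x y, map_rel s a x y -> connect (map_rel s a) y x.
Proof.
move=> aK x y /orP[/eqP->|/eqP->]; last by apply: connect1; rewrite /map_rel aK eqxx orbT.
have : x \in porbit s (s x) by rewrite porbit_sym; have := mem_porbit s 1 x; rewrite expg1.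
case/porbitP=> i Ei; rewrite {2}Ei permX.
clear Ei; elim: i => [|i IH]; first exact: connect0.
apply: connect_trans IH (connect1 _); by rewrite /map_rel /= eqxx.
Qed.

End Gen.

Lemma count_facts n m (s a : {perm 'I_m}) : ideal_triang_sphere n s a ->
  m + 12 = 6 * n /\ m = \sum_(A in porbits s) #|A|.
Proof.
case=> Ha Hf _ Heu Hn.
have c2 := unif_count (fun x => card_inv (proj1 (Ha x)) (proj2 (Ha x))).
have c3 := unif_count Hf.
rewrite card_ord in c2 c3.
split; last by rewrite -(deg_sum s) card_ord.
lia.
Qed.
Lemma iter_val m (f : 'I_m -> 'I_m) (g : nat -> nat) :
  (forall x, val (f x) = g (val x)) -> forall k x, val (iter k f x) = iter k g (val x).
Proof. by move=> H; elim=> [|k IH] x //=; rewrite H IH. Qed.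

Lemma traj_val m (f : 'I_m -> 'I_m) (g : nat -> nat) :
  (forall x, val (f x) = g (val x)) -> forall k x, map val (traject f x k) = traject g (val x) k.
Proof. by move=> H; elim=> [|k IH] x //=; rewrite IH H. Qed.

Lemma porbit_val m (s : {perm 'I_m}) (g : nat -> nat) x k :
  (forall x, val (s x) = g (val x)) -> 0 < k -> iter k g (val x) == val x ->
  uniq (traject g (val x) k) -> #|porbit s x| = k.
Proof.
move=> H k0 /eqP Hi U; apply: card_porbit_k => //.
  by apply: val_inj; rewrite (iter_val H).
by rewrite -(map_inj_uniq val_inj) (traj_val H).
Qed.

Lemma build (m n L : nat) (gs hs ga cs : nat -> nat) :
  all (fun i => [&& gs i < m, ga i < m, hs (gs i) == i, ga i != i, ga (ga i) == i,
       iter 3 (fun j => gs (ga j)) i == i, uniq (traject (fun j => gs (ga j)) i 3),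
       0 < cs i, iter (cs i) gs i == i, uniq (traject gs i (cs i)) & cs i %| L]) (iota 0 m) ->
  all (fun i => has (fun j => (gs j == i) || (ga j == i)) (iota 0 i)) (iota 1 m.-1) ->
  0 < m -> 0 < L ->
  sumn (map (fun i => L %/ cs i) (iota 0 m)) = n * L ->
  6 * n = m + 12 ->
  exists (s a : {perm 'I_m}), ideal_triang_sphere n s a /\
    (forall x : 'I_m, puncture_degree s x = cs x /\ val (a x) = ga x).
Proof.
move=> Hall Hbfs m0 L0 Hsum Heu.
have H i : i < m -> [&& gs i < m, ga i < m, hs (gs i) == i, ga i != i, ga (ga i) == i,
       iter 3 (fun j => gs (ga j)) i == i, uniq (traject (fun j => gs (ga j)) i 3),
       0 < cs i, iter (cs i) gs i == i, uniq (traject gs i (cs i)) & cs i %| L].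
  by move=> lim; apply: (allP Hall); rewrite mem_iota.
have gsO i : i < m -> gs i < m by move/H; case/and5P.
have gaO i : i < m -> ga i < m by move/H; case/and5P.
pose fs (x : 'I_m) : 'I_m := Ordinal (gsO x (ltn_ord x)).
pose fa (x : 'I_m) : 'I_m := Ordinal (gaO x (ltn_ord x)).
have fs_inj : injective fs.
  move=> x y /(congr1 val) /= e; apply: ord_inj.
  have /H/and5P[_ _ /eqP hx _ _] := ltn_ord x.
  have /H/and5P[_ _ /eqP hy _ _] := ltn_ord y.
  by rewrite -hx -hy e.
have fa_inj : injective fa.
  move=> x y /(congr1 val) /= e; apply: ord_inj.
  have /H/and5P[_ _ _ _ /andP[/eqP hx _]] := ltn_ord x.
  have /H/and5P[_ _ _ _ /andP[/eqP hy _]] := ltn_ord y.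
  by rewrite -hx -hy e.
pose s := perm fs_inj; pose a := perm fa_inj.
have sv x : val (s x) = gs (val x) by rewrite permE.
have av x : val (a x) = ga (val x) by rewrite permE.
have fv x : val ((a * s)%g x) = gs (ga (val x)) by rewrite permM sv av.
exists s, a; split; last first.
  move=> x; split => //; rewrite /puncture_degree.
  have /H/and5P[_ _ _ _ /and5P[_ _ _ c0 /and3P[ci cu _]]] := ltn_ord x.
  exact: porbit_val sv c0 ci cu.
have aK x : a (a x) = x.
  by apply: val_inj; rewrite !av; have /H/and5P[_ _ _ _ /andP[/eqP -> _]] := ltn_ord x.
have cnt0 : forall x y, connect (map_rel s a) x y.
  pose x0 : 'I_m := Ordinal m0.
  suff C i (Hi : i < m) : connect (map_rel s a) x0 (Ordinal Hi).
    move=> x y; have Cx := C _ (ltn_ord x); have Cy := C _ (ltn_ord y).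
    have -> : x = Ordinal (ltn_ord x) by apply: val_inj.
    have -> : y = Ordinal (ltn_ord y) by apply: val_inj.
    apply: (connect_trans _ Cy).
    exact: (@my_connect_rev _ (map_rel s a) (@map_rel_rev _ s a aK) _ _ Cx).
  elim/ltn_ind: i Hi => i IH Hi.
  case: i IH Hi => [|i] IH Hi.
    by have -> : Ordinal Hi = x0 by apply: val_inj.
  have : i.+1 \in iota 1 m.-1 by rewrite mem_iota /=; lia.
  move/(allP Hbfs)/hasP=> [j]; rewrite mem_iota /= add0n => ji Hj.
  have jm : j < m by lia.
  apply: connect_trans (IH j ji jm) (connect1 _).
  rewrite /map_rel -!val_eqE /= sv av /=.
  by case/orP: Hj => /eqP ->; rewrite eqxx ?orbT.
have Ps : #|porbits s| * L = n * L.
  rewrite div_count //; last first.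
    move=> x; have /H/and5P[_ _ _ _ /and5P[_ _ _ c0 /and3P[ci cu cL]]] := ltn_ord x.
    by rewrite (porbit_val sv c0 ci cu).
  rewrite -Hsum (eq_bigr (fun x : 'I_m => L %/ cs x)); last first.
    move=> x _; have /H/and5P[_ _ _ _ /and5P[_ _ _ c0 /and3P[ci cu cL]]] := ltn_ord x.
    by rewrite (porbit_val sv c0 ci cu).
  rewrite -(big_mkord xpredT (fun i => L %/ cs i)) sumnE big_map.
  by rewrite /index_iota subn0.
split => //.
- move=> x; split; last exact: aK.
  by rewrite -val_eqE av; have /H/and5P[_ _ _ -> _] := ltn_ord x.
- move=> x; have /H/and5P[_ _ _ _ /and5P[_ fi fu _ _]] := ltn_ord x.
  exact: porbit_val fv _ fi fu.
- have Pa : #|porbits a| * 2 = m.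
    rewrite (unif_count (k := 2)) ?card_ord // => x.
    by apply: card_inv; [rewrite -val_eqE av; have /H/and5P[_ _ _ -> _] := ltn_ord x | exact: aK].
  have Pf : #|porbits (a * s)%g| * 3 = m.
    rewrite (unif_count (k := 3)) ?card_ord // => x.
    have /H/and5P[_ _ _ _ /and5P[_ fi fu _ _]] := ltn_ord x.
    exact: porbit_val fv _ fi fu.
  have : #|porbits s| = n by apply/eqP; rewrite -(eqn_pmul2r L0) Ps.
  move=> Ns; rewrite Ns.
  move: Pf Pa; set Nf := #|porbits (a * s)%g|; set Na := #|porbits a|.
  move=> Pf Pa; lia.
- by apply/eqP; rewrite -(eqn_pmul2r L0) Ps.
Qed.

Definition oct_s := [:: 1; 3; 5; 6; 8; 9; 0; 12; 13; 14; 11; 16; 17; 18; 2; 20; 21; 22; 4; 15; 23; 10; 7; 19].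
Definition oct_hs := [:: 6; 0; 14; 1; 18; 2; 3; 22; 4; 5; 21; 10; 7; 8; 9; 19; 11; 12; 13; 23; 15; 16; 17; 20].
Definition oct_a := [:: 2; 4; 0; 7; 1; 10; 11; 3; 14; 15; 5; 6; 18; 19; 8; 9; 22; 23; 12; 13; 21; 20; 16; 17].
Definition oct_c := [:: 4; 4; 4; 4; 4; 4; 4; 4; 4; 4; 4; 4; 4; 4; 4; 4; 4; 4; 4; 4; 4; 4; 4; 4].

Definition bp_s := [:: 1; 3; 5; 0; 7; 8; 10; 11; 12; 6; 14; 15; 2; 17; 9; 4; 13; 16].
Definition bp_hs := [:: 3; 0; 12; 1; 15; 2; 9; 4; 5; 14; 6; 7; 8; 16; 10; 11; 17; 13].
Definition bp_a := [:: 2; 4; 0; 6; 1; 9; 3; 12; 13; 5; 15; 16; 7; 8; 17; 10; 11; 14].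
Definition bp_c := [:: 3; 3; 4; 3; 4; 4; 4; 4; 4; 4; 4; 4; 4; 3; 4; 4; 3; 3].

Definition tet_s := [:: 1; 3; 5; 0; 7; 8; 10; 11; 2; 6; 9; 4].
Definition tet_hs := [:: 3; 0; 8; 1; 11; 2; 9; 4; 5; 10; 6; 7].
Definition tet_a := [:: 2; 4; 0; 6; 1; 9; 3; 8; 7; 5; 11; 10].
Definition tet_c := [:: 3; 3; 3; 3; 3; 3; 3; 3; 3; 3; 3; 3].

Lemma allI m (P : nat -> bool) : all P (iota 0 m) -> forall x : 'I_m, P x.
Proof. by move=> H x; apply: (allP H); rewrite mem_iota add0n ltn_ord. Qed.

Lemma sum_lb (T : finType) (s : {perm T}) k : (forall x, k <= #|porbit s x|) ->
  #|porbits s| * k <= \sum_(A in porbits s) #|A|.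
Proof.
move=> H; rewrite -sum_nat_const; apply: leq_sum => A /imsetP[y _ ->]; exact: H.
Qed.

Lemma sum_lb1 (T : finType) (s : {perm T}) y : (forall x, 3 <= #|porbit s x|) ->
  4 <= #|porbit s y| -> #|porbits s| * 3 + 1 <= \sum_(A in porbits s) #|A|.
Proof.
move=> H Hy.
apply: (@leq_trans (\sum_(A in porbits s) (3 + (A == porbit s y)))).
  rewrite big_split /= sum_nat_const leq_add2l.
  rewrite (bigD1 (porbit s y)) /=; last exact: imset_f.
  by rewrite eqxx.
apply: leq_sum => A /imsetP[z _ ->].
case: eqP => [->|_]; first by rewrite addn1.
by rewrite addn0.
Qed.

Local Notation nf L := (fun i => nth 0 L i).

Theorem lemma5p4 :
  (exists (m : nat) (s a : {perm 'I_m}), ideal_triang_sphere 6 s a /\ T4 s a) /\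
  ((exists (m : nat) (s a : {perm 'I_m}), ideal_triang_sphere 5 s a /\ T3half s a) /\
   ~ (exists (m : nat) (s a : {perm 'I_m}), ideal_triang_sphere 5 s a /\ T4 s a)) /\
  ((exists (m : nat) (s a : {perm 'I_m}), ideal_triang_sphere 4 s a /\ T3 s a) /\
   ~ (exists (m : nat) (s a : {perm 'I_m}), ideal_triang_sphere 4 s a /\ T3half s a)).
Proof.
split; [|split; split].
- have [s [a [Hi Hd]]] := @build 24 6 4 (nf oct_s) (nf oct_hs) (nf oct_a) (nf oct_c)
     ltac:(by vm_compute) ltac:(by vm_compute) erefl erefl ltac:(by vm_compute) erefl.
  exists 24, s, a; split => // x; rewrite (Hd x).1.
  by apply: (allI (P := fun i => 4 <= nth 0 oct_c i)); vm_compute.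
- have [s [a [Hi Hd]]] := @build 18 5 12 (nf bp_s) (nf bp_hs) (nf bp_a) (nf bp_c)
     ltac:(by vm_compute) ltac:(by vm_compute) erefl erefl ltac:(by vm_compute) erefl.
  exists 18, s, a; split => //; split => x.
    rewrite (Hd x).1.
    by apply: (allI (P := fun i => 3 <= nth 0 bp_c i)); vm_compute.
  rewrite (Hd x).1 (Hd (a x)).1 (Hd x).2; apply/orP.
  by apply: (allI (P := fun i => (4 <= nth 0 bp_c i) || (4 <= nth 0 bp_c (nth 0 bp_a i)))); vm_compute.
- case=> m [s [a [Hi H4]]].
  have [E1 E2] := count_facts Hi.
  have := sum_lb H4; rewrite -E2; case: Hi => _ _ _ _ ->; lia.
- have [s [a [Hi Hd]]] := @build 12 4 3 (nf tet_s) (nf tet_hs) (nf tet_a) (nf tet_c)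
     ltac:(by vm_compute) ltac:(by vm_compute) erefl erefl ltac:(by vm_compute) erefl.
  exists 12, s, a; split => // x; rewrite (Hd x).1.
  by apply: (allI (P := fun i => 3 <= nth 0 tet_c i)); vm_compute.
- case=> m [s [a [Hi [H3 H4]]]].
  have [E1 E2] := count_facts Hi.
  have m0 : 0 < m by lia.
  pose x0 : 'I_m := Ordinal m0.
  have [y Hy] : exists y, 4 <= #|porbit s y|.
    by case: (H4 x0) => h; [exists x0 | exists (a x0)].
  have := sum_lb1 H3 Hy; rewrite -E2; case: Hi => _ _ _ _ ->; lia.
Qed.
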